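(* For every $\varepsilon>0$ there exists a nonsplit characteristically nilpotent Lie algebra $\mathfrak{h}$ such that \[\frac{\dim\mathfrak{h}-\dim Z(\mathfrak{h})}{\dim Z(\mathfrak{h})}<\varepsilon.\]
   Context: All Lie algebras are finite-dimensional and complex. $Z(\mathfrak{h})$ denotes the center. A Lie algebra is nonsplit if it is not the direct sum of two nonzero ideals. A nilpotent Lie algebra $\mathfrak{g}$ is characteristically nilpotent if there is $m$ with $\mathfrak{g}^{[m]}=0$, where $\mathfrak{g}^{[1]}=\{f(Y): f\in \mathrm{Der}(\mathfrak{g}), Y\in\mathfrak{g}\}$ and $\mathfrak{g}^{[k]}=\mathrm{Der}(\mathfrak{g})(\mathfrak{g}^{[k-1]})$ (equivalently, $\mathrm{Der}(\mathfrak{g})$ is nilpotent). *)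

(* Defs.v *)
From HB Require Import structures.
From mathcomp Require Import all_boot all_order all_algebra.
From mathcomp Require Import reals complex.
Set Implicit Arguments. Unset Strict Implicit. Unset Printing Implicit Defensive.
Import Order.TTheory GRing.Theory Num.Theory.
Local Open Scope ring_scope.

(* A finite-dimensional Lie algebra over a field K of dimension n is modelled on
   the coordinate space 'rV[K]_n with a bracket br. *)
Section Lie.
Variable K : fieldType.
Variable n : nat.
Notation V := 'rV[K]_n.
Implicit Types (br : V -> V -> V).

Definition is_lie_bracket br : Prop :=
  [/\ (forall (a : K) x y z, br (a *: x + y) z = a *: br x z + br y z),
      (forall (a : K) x y z, br x (a *: y + z) = a *: br x y + br x z),
      (forall x, br x x = 0)
    & (forall x y z, br x (br y z) + br y (br z x) + br z (br x y) = 0)].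

Definition is_center_mx br (Z : 'M[K]_n) : Prop :=
  forall x : V, (x <= Z)%MS <-> (forall y, br x y = 0).

(* ideals, represented by the row space of a square matrix *)
Definition is_ideal br (I : 'M[K]_n) : Prop :=
  forall x y : V, (x <= I)%MS -> (br x y <= I)%MS.

Definition nonsplit br : Prop :=
  ~ exists I J : 'M[K]_n,
      is_ideal br I /\ is_ideal br J /\ I != 0 /\ J != 0 /\
      (I + J == (1%:M : 'M[K]_n))%MS /\ (I :&: J == (0 : 'M[K]_n))%MS.

(* nilpotent: some term of the lower central series vanishes, i.e. all
   brackets [x1,[x2,...,[xk,y]...]] of a fixed length vanish *)
Definition nilpotent br : Prop :=
  exists k : nat, forall (xs : seq V) (y : V), size xs = k -> foldr br y xs = 0.

Definition is_derivation br (D : 'M[K]_n) : Prop :=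
  forall x y : V, br x y *m D = br (x *m D) y + br x (y *m D).

(* g^[m] = 0 : every composite of m derivations applied to any Y is zero *)
Definition char_nilpotent br : Prop :=
  nilpotent br /\
  exists m : nat, forall (Ds : seq 'M[K]_n) (Y : V),
      size Ds = m -> (forall D, D \in Ds -> is_derivation br D) ->
      foldl (@mulmx K 1 n n) Y Ds = 0.
End Lie.

(* Main.v *)
Require Import Defs.
From HB Require Import structures.
From mathcomp Require Import all_boot all_order all_algebra.
From mathcomp Require Import zify ring lra.

Module S1.
Set Implicit Arguments. Unset Strict Implicit. Unset Printing Implicit Defensive.
Import Order.TTheory GRing.Theory Num.Theory.
Local Open Scope ring_scope.

Section Alg.
Variable K : fieldType.
Variable d : nat.

Definition sc (i : 'I_d) : 'I_d := ordS i.
Definition pc (i : 'I_d) : 'I_d := ord_pred i.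
Definition adj (i j : 'I_d) : bool := (j == sc i) || (i == sc j).
Definition pairP (p : 'I_d * 'I_d) : bool := (p.1 < p.2)%N && ~~ adj p.1 p.2.
Definition Pairs := {p : 'I_d * 'I_d | pairP p}.
Definition T : finType := ('I_7 + ('I_d + Pairs))%type.

Definition X (k : 'I_7) : T := inl k.
Definition V (i : 'I_d) : T := inr (inl i).
Definition W (p : Pairs) : T := inr (inr p).
Notation X1 := (X (@Ordinal 7 0 isT)).
Notation X2 := (X (@Ordinal 7 1 isT)).
Notation X3 := (X (@Ordinal 7 2 isT)).
Notation X4 := (X (@Ordinal 7 3 isT)).
Notation X5 := (X (@Ordinal 7 4 isT)).
Notation X6 := (X (@Ordinal 7 5 isT)).
Notation X7 := (X (@Ordinal 7 6 isT)).

Definition cyc (f g : T -> K) : K :=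
  \sum_(i < d) (f (V i) * g (V (sc i)) - f (V (sc i)) * g (V i)).

Definition Bf (f g : T -> K) (t : T) : K :=
  match t with
  | inl c => match nat_of_ord c with
    | 2 => f X1 * g X2 - f X2 * g X1
    | 3 => f X1 * g X3 - f X3 * g X1
    | 4 => f X1 * g X4 - f X4 * g X1
    | 5 => f X1 * g X5 - f X5 * g X1 + (f X2 * g X3 - f X3 * g X2)
    | 6 => f X1 * g X6 - f X6 * g X1 + (f X2 * g X3 - f X3 * g X2)
           + (f X2 * g X4 - f X4 * g X2) + cyc f g
    | _ => 0 end
  | inr (inl _) => 0
  | inr (inr p) => f (V (val p).1) * g (V (val p).2) - f (V (val p).2) * g (V (val p).1)
  end.

Definition dl (a : T) : T -> K := fun s => (a == s)%:R.

Lemma cyc_ext f f' g g' : (forall s, f s = f' s) -> (forall s, g s = g' s) ->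
  cyc f g = cyc f' g'.
Proof. by move=> hf hg; apply: eq_bigr => i _; rewrite !hf !hg. Qed.

Lemma Bf_ext f f' g g' : (forall s, f s = f' s) -> (forall s, g s = g' s) ->
  forall t, Bf f g t = Bf f' g' t.
Proof.
move=> hf hg [c|[i|p]] //=; last by rewrite !hf !hg.
by case: c => [[|[|[|[|[|[|[|c]]]]]]] hc] //=; rewrite !hf !hg // (cyc_ext hf hg).
Qed.

Lemma cyc0l f g : (forall i, f (V i) = 0) -> cyc f g = 0.
Proof. by move=> h; apply: big1 => i _; rewrite !h !mul0r subrr. Qed.
Lemma cyc0r f g : (forall i, g (V i) = 0) -> cyc f g = 0.
Proof. by move=> h; apply: big1 => i _; rewrite !h !mulr0 subrr. Qed.

Lemma cyc_linl a f g h :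
  cyc (fun s => a * f s + g s) h = a * cyc f h + cyc g h.
Proof.
rewrite /cyc mulr_sumr -big_split /=; apply: eq_bigr => i _; ring.
Qed.

Lemma cyc_anti f g : cyc f g = - cyc g f.
Proof.
rewrite /cyc -sumrN; apply: eq_bigr => i _; ring.
Qed.

Lemma cyc_alt f : cyc f f = 0.
Proof. by apply: big1 => i _; ring. Qed.

Lemma Bf_linl a f g h t :
  Bf (fun s => a * f s + g s) h t = a * Bf f h t + Bf g h t.
Proof.
case: t => [c|[i|p]] /=; last (by ring); last by rewrite mulr0 addr0.
case: c => [[|[|[|[|[|[|[|c]]]]]]] hc] //=; rewrite ?cyc_linl; ring.
Qed.

Lemma Bf_anti f g t : Bf f g t = - Bf g f t.
Proof.
case: t => [c|[i|p]] /=; last (by ring); last by rewrite oppr0.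
case: c => [[|[|[|[|[|[|[|c]]]]]]] hc] //=; rewrite ?oppr0 //; try ring.
rewrite (cyc_anti f g); ring.
Qed.

Lemma Bf_alt f t : Bf f f t = 0.
Proof.
case: t => [c|[i|p]] /=; last (by ring); last by [].
case: c => [[|[|[|[|[|[|[|c]]]]]]] hc] //=; rewrite ?cyc_alt; ring.
Qed.

Lemma Bf_linr a f g h t :
  Bf h (fun s => a * f s + g s) t = a * Bf h f t + Bf h g t.
Proof. by rewrite Bf_anti Bf_linl (Bf_anti f) (Bf_anti g); ring. Qed.

Lemma BfV f g i : Bf f g (V i) = 0. Proof. by []. Qed.
Lemma BfX1 f g : Bf f g X1 = 0. Proof. by []. Qed.
Lemma BfX2 f g : Bf f g X2 = 0. Proof. by []. Qed.

Lemma Bf_jacobi f g h t :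
  Bf f (Bf g h) t + Bf g (Bf h f) t + Bf h (Bf f g) t = 0.
Proof.
case: t => [c|[i|p]] /=; last (by rewrite !mulr0 !subrr !addr0); last by rewrite !addr0.
case: c => [[|[|[|[|[|[|[|c]]]]]]] hc] //=; rewrite ?addr0 //; try ring.
rewrite !(@cyc0r _ (Bf _ _)) //; ring.
Qed.

End Alg.

End S1.
Import S1.

Module S2.
Set Implicit Arguments. Unset Strict Implicit. Unset Printing Implicit Defensive.
Import Order.TTheory GRing.Theory Num.Theory.
Local Open Scope ring_scope.

Section Alg2.
Variable K : fieldType.
Variable d : nat.
Local Notation T := (T d).
Local Notation n := #|T|.
Local Notation Bf := (@Bf K d).

Definition co (x : 'rV[K]_n) (t : T) : K := x 0 (enum_rank t).
Definition ofun (f : T -> K) : 'rV[K]_n := \row_k f (enum_val k).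
Definition br (x y : 'rV[K]_n) : 'rV[K]_n := ofun (Bf (co x) (co y)).
Definition Mm (D : 'M[K]_n) (t s : T) : K := D (enum_rank t) (enum_rank s).

Lemma co_ofun f t : co (ofun f) t = f t.
Proof. by rewrite /co /ofun mxE enum_rankK. Qed.

Lemma ofun_co x : ofun (co x) = x.
Proof. by apply/rowP => k; rewrite /ofun /co mxE enum_valK. Qed.

Lemma co_lin a x y t : co (a *: x + y) t = a * co x t + co y t.
Proof. by rewrite /co !mxE. Qed.

Lemma co_br x y t : co (br x y) t = Bf (co x) (co y) t.
Proof. exact: co_ofun. Qed.

Lemma co_inj x y : (forall t, co x t = co y t) -> x = y.
Proof. by move=> h; rewrite -(ofun_co x) -(ofun_co y); apply/rowP => k; rewrite !mxE h. Qed.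

Lemma coD x y t : co (x + y) t = co x t + co y t.
Proof. by rewrite /co mxE. Qed.

Lemma coN x t : co (- x) t = - co x t.
Proof. by rewrite /co mxE. Qed.

Lemma co0 t : co 0 t = 0. Proof. by rewrite /co mxE. Qed.

Lemma co_mul x (D : 'M[K]_n) s : co (x *m D) s = \sum_t co x t * Mm D t s.
Proof.
rewrite /co mxE (reindex (@enum_rank T)) //=.
by exists enum_val => i _; rewrite ?enum_rankK ?enum_valK.
Qed.

Lemma br_lie : is_lie_bracket br.
Proof.
split.
- move=> a x y z; apply: co_inj => t.
  rewrite co_lin !co_br -Bf_linl; apply: Bf_ext => // s; exact: co_lin.
- move=> a x y z; apply: co_inj => t.
  rewrite co_lin !co_br -Bf_linr; apply: Bf_ext => // s; exact: co_lin.
- move=> x; apply: co_inj => t; by rewrite co_br Bf_alt co0.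
- move=> x y z; apply: co_inj => t.
  rewrite co0 !coD !co_br.
  rewrite -(Bf_jacobi (co x) (co y) (co z) t).
  by congr (_ + _ + _); apply: Bf_ext => // s; rewrite co_br.
Qed.

Lemma br_anti x y : br x y = - br y x.
Proof. by apply: co_inj => t; rewrite coN !co_br Bf_anti. Qed.

Lemma br_addl x y z : br (x + y) z = br x z + br y z.
Proof.
apply: co_inj => t; rewrite coD !co_br.
have e1 : forall s, co (x + y) s = 1 * co x s + co y s by move=> s; rewrite coD mul1r.
by rewrite (Bf_ext e1 (fun s => erefl)) Bf_linl mul1r.
Qed.
Lemma br_addr x y z : br z (x + y) = br z x + br z y.
Proof. by rewrite br_anti br_addl opprD -!br_anti. Qed.

End Alg2.

End S2.
Import S2.

Module S3.
Set Implicit Arguments. Unset Strict Implicit. Unset Printing Implicit Defensive.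
Import Order.TTheory GRing.Theory Num.Theory.
Local Open Scope ring_scope.

Section Alg3.
Variable K : fieldType.
Variable d : nat.
Local Notation T := (T d).
Local Notation n := #|T|.
Local Notation Bf := (@Bf K d).
Local Notation X := (@X d).
Local Notation V := (@V d).
Local Notation W := (@W d).
Local Notation dl := (@dl K d).
Local Notation X1 := (X (@Ordinal 7 0 isT)).
Local Notation X2 := (X (@Ordinal 7 1 isT)).
Local Notation X3 := (X (@Ordinal 7 2 isT)).
Local Notation X4 := (X (@Ordinal 7 3 isT)).
Local Notation X5 := (X (@Ordinal 7 4 isT)).
Local Notation X6 := (X (@Ordinal 7 5 isT)).
Local Notation X7 := (X (@Ordinal 7 6 isT)).

Definition ht (t : T) : nat :=
  match t with inl c => c.+1 | inr (inl _) => 3 | inr (inr _) => 6 end.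

Definition lev (p : nat) (f : T -> K) := forall s, (ht s < p)%N -> f s = 0.

Lemma ht_le7 t : (ht t <= 7)%N.
Proof. by case: t => [c|[i|q]] //=; case: c. Qed.

Lemma lev8 f : lev 8 f -> forall s, f s = 0.
Proof. by move=> h s; apply: h; rewrite ltnS ht_le7. Qed.

Lemma Bf_lev p q f g : lev p f -> lev q g -> lev (p + q) (Bf f g).
Proof.
move=> hf hg.
have P0 : forall a b s, (ht a + ht b <= ht s)%N -> (ht s < p + q)%N -> f a * g b = 0.
  move=> a b s h1 h2; case: (ltnP (ht a) p) => ha; first by rewrite hf // mul0r.
  by rewrite hg ?mulr0 //; lia.
move=> [c|[i|r]] hs /=; last 2 first.
- by [].
- by rewrite !(P0 _ _ (inr (inr r))) ?subrr.
case: c hs => [[|[|[|[|[|[|[|c]]]]]]] hc] hs //=;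
  rewrite ?(P0 _ _ (inl (Ordinal hc))) ?subrr ?addr0 //.
rewrite add0r /cyc big1 // => i _.
by rewrite !(P0 _ _ (inl (Ordinal hc))) ?subrr.
Qed.

Lemma lev_add p f g : lev p f -> lev p g -> lev p (fun s => f s + g s).
Proof. by move=> hf hg s hs; rewrite hf ?hg ?addr0. Qed.

Lemma lev_dl a : lev (ht a) (dl a).
Proof. move=> s hs; rewrite /dl; case: eqP => // eas; by rewrite eas ltnn in hs. Qed.

Lemma lev_mon p q f : (p <= q)%N -> lev q f -> lev p f.
Proof. by move=> hpq h s hs; apply: h; apply: leq_trans hpq. Qed.

Definition strict (M : T -> T -> K) := forall t, lev (ht t).+1 (M t).

Lemma lev_mul (D : 'M[K]_n) p x : strict (Mm D) -> lev p (co x) -> lev p.+1 (co (x *m D)).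
Proof.
move=> hD hx s hs; rewrite co_mul big1 // => t _.
case: (ltnP (ht t) p) => h; first by rewrite hx // mul0r.
by rewrite hD ?mulr0 //; lia.
Qed.

Lemma lev1 f : lev 1 f.
Proof. by move=> [c|[i|r]]. Qed.

End Alg3.

End S3.
Import S3.

Module S4.
Set Implicit Arguments. Unset Strict Implicit. Unset Printing Implicit Defensive.
Import Order.TTheory GRing.Theory Num.Theory.
Local Open Scope ring_scope.

Section Alg4.
Variable K : fieldType.
Variable d : nat.
Local Notation T := (T d).
Local Notation n := #|T|.
Local Notation Bf := (@Bf K d).
Local Notation X := (@X d).
Local Notation V := (@V d).
Local Notation W := (@W d).
Local Notation dl := (@dl K d).
Local Notation X1 := (X (@Ordinal 7 0 isT)).
Local Notation X2 := (X (@Ordinal 7 1 isT)).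
Local Notation X3 := (X (@Ordinal 7 2 isT)).
Local Notation X4 := (X (@Ordinal 7 3 isT)).
Local Notation X5 := (X (@Ordinal 7 4 isT)).
Local Notation X6 := (X (@Ordinal 7 5 isT)).
Local Notation X7 := (X (@Ordinal 7 6 isT)).

Definition mulM (M : T -> T -> K) (f : T -> K) (s : T) : K := \sum_t f t * M t s.

Lemma mulM_ext M f f' s : (forall t, f t = f' t) -> mulM M f s = mulM M f' s.
Proof. by move=> h; apply: eq_bigr => t _; rewrite h. Qed.

Lemma mulM_dl M a s : mulM M (dl a) s = M a s.
Proof.
rewrite /mulM (bigD1 a) //= big1 ?addr0; first by rewrite /dl eqxx mul1r.
by move=> t /negbTE; rewrite /dl eq_sym => ->; rewrite mul0r.
Qed.

Lemma mulM_add M f g s : mulM M (fun t => f t + g t) s = mulM M f s + mulM M g s.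
Proof. by rewrite /mulM -big_split; apply: eq_bigr => t _; rewrite mulrDl. Qed.

Lemma mulM_0 M s : mulM M (fun _ => 0) s = 0.
Proof. by apply: big1 => t _; rewrite mul0r. Qed.

Ltac bfcase := case=> [[[|[|[|[|[|[|[|?]]]]]]] ?]|[?|?]] //=;
  rewrite /dl /=; try (rewrite cyc0r; last by move=> ?); try (rewrite cyc0l; last by move=> ?); rewrite /=; try ring.

Lemma B12 : forall t, Bf (dl X1) (dl X2) t = dl X3 t. Proof. bfcase. Qed.
Lemma B13 : forall t, Bf (dl X1) (dl X3) t = dl X4 t. Proof. bfcase. Qed.
Lemma B14 : forall t, Bf (dl X1) (dl X4) t = dl X5 t. Proof. bfcase. Qed.
Lemma B15 : forall t, Bf (dl X1) (dl X5) t = dl X6 t. Proof. bfcase. Qed.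
Lemma B16 : forall t, Bf (dl X1) (dl X6) t = dl X7 t. Proof. bfcase. Qed.
Lemma B23 : forall t, Bf (dl X2) (dl X3) t = dl X6 t + dl X7 t. Proof. bfcase. Qed.
Lemma B25 : forall t, Bf (dl X2) (dl X5) t = 0. Proof. bfcase. Qed.
Lemma BV1 i : forall t, Bf (dl (V i)) (dl X1) t = 0. Proof. bfcase. Qed.
Lemma BV2 i : forall t, Bf (dl (V i)) (dl X2) t = 0. Proof. bfcase. Qed.

Lemma cycX f k : cyc f (dl (X k)) = 0.
Proof. by apply: cyc0r => i; rewrite /dl. Qed.
Lemma cycXl f k : cyc (dl (X k)) f = 0.
Proof. by apply: cyc0l => i; rewrite /dl. Qed.

Lemma lc1 (x l1 r1 c1 : K) : l1 = r1 -> x = c1 * (l1 - r1) -> x = 0.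
Proof. by move=> -> ->; rewrite subrr mulr0. Qed.
Lemma lc2 (x l1 r1 l2 r2 c1 c2 : K) : l1 = r1 -> l2 = r2 ->
  x = c1 * (l1 - r1) + c2 * (l2 - r2) -> x = 0.
Proof. by move=> -> -> ->; rewrite !subrr !mulr0 addr0. Qed.

Section Core.
Variable M : T -> T -> K.

Lemma der_eq_of (hM : forall a b s, mulM M (Bf (dl a) (dl b)) s =
     Bf (M a) (dl b) s + Bf (dl a) (M b) s) a b c :
  (forall t, Bf (dl a) (dl b) t = dl c t) ->
  forall s, M c s = Bf (M a) (dl b) s + Bf (dl a) (M b) s.
Proof. by move=> hB s; rewrite -hM (mulM_ext _ _ hB) mulM_dl. Qed.

Arguments S1.dl : simpl never.

Lemma core_der (hM : forall a b s, mulM M (Bf (dl a) (dl b)) s =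
     Bf (M a) (dl b) s + Bf (dl a) (M b) s) :
  [/\ M X1 X1 = 0, M X2 X1 = 0 & M X2 X2 = 0].
Proof.
have de := der_eq_of hM.
have E33 := de _ _ _ B12 X3.
have E44 := de _ _ _ B13 X4.
have E55 := de _ _ _ B14 X5.
have E66 := de _ _ _ B15 X6.
have E77 := de _ _ _ B16 X7.
have E34 := de _ _ _ B12 X4.
have E45 := de _ _ _ B13 X5.
have E56 := de _ _ _ B14 X6.
have E67 := de _ _ _ B15 X7.
have E32 := de _ _ _ B12 X2.
have E43 := de _ _ _ B13 X3.
have E54 := de _ _ _ B14 X4.
have E65 := de _ _ _ B15 X5.
have E76 := de _ _ _ B16 X6.
have E42 := de _ _ _ B13 X2.
have E53 := de _ _ _ B14 X3.
have E64 := de _ _ _ B15 X4.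
have E52 := de _ _ _ B14 X2.
have E63 := de _ _ _ B15 X3.
have E74 := de _ _ _ B16 X4.
have G := hM X2 X3.
have G4 := G X4. have G6 := G X6. have G7 := G X7.
rewrite !(mulM_ext _ _ B23) !mulM_add !mulM_dl in G4 G6 G7.
rewrite /= ?cycX ?cycXl /dl /= in E33 E44 E55 E66 E77 E34 E45 E56 E67 E32 E43 E54 E65 E76 E42 E53 E64 E52 E63 E74 G4 G6 G7.
rewrite ?(mulr0, mul0r, mulr1, mul1r, subr0, sub0r, addr0, add0r, oppr0) in E33 E44 E55 E66 E77 E34 E45 E56 E67 E32 E43 E54 E65 E76 E42 E53 E64 E52 E63 E74 G4 G6 G7.
rewrite E76 E65 E54 E43 E32 E66 E55 E44 E33 in G6.
rewrite E67 E56 E45 E34 E77 E66 E55 E44 E33 in G7.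
rewrite E64 E53 E42 E74 E63 E52 in G4.
have a1 : M X1 X1 = 0.
  by apply: (lc2 (c1 := -1) (c2 := 1) G6 G7); ring.
split => //.
  by apply: (lc1 (c1 := -1) G4); ring.
by apply: (lc2 (c1 := -4) (c2 := 3) G6 G7); ring.
Qed.

End Core.
End Alg4.

End S4.
Import S4.

Module S5.
Set Implicit Arguments. Unset Strict Implicit. Unset Printing Implicit Defensive.
Import Order.TTheory GRing.Theory Num.Theory.
Local Open Scope ring_scope.

Section Idx.
Variable d : nat.
Hypothesis hd : (5 <= d)%N.
Local Notation sc := (@sc d).
Local Notation pc := (@pc d).

Lemma scn_val k (i : 'I_d) : val (iter k sc i) = ((i + k) %% d)%N.
Proof.
elim: k => [|k IH] /=; first by rewrite addn0 modn_small.
by rewrite /S1.sc /ordS /= IH -addn1 modnDml -addnA addn1.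
Qed.

Lemma scn_neq k (i : 'I_d) : (0 < k < d)%N -> iter k sc i != i.
Proof.
move=> /andP[k0 kd]; have io := ltn_ord i; apply/eqP => /(congr1 val); rewrite scn_val /=.
case: (ltnP (i + k) d) => h.
  rewrite modn_small //; lia.
have -> : (i + k = (i + k - d) + d)%N by lia.
rewrite modnDr modn_small; lia.
Qed.

Lemma sc1 (i : 'I_d) : sc i != i. Proof. by apply: (@scn_neq 1); lia. Qed.
Lemma sc2 (i : 'I_d) : sc (sc i) != i. Proof. by apply: (@scn_neq 2); lia. Qed.
Lemma sc3 (i : 'I_d) : sc (sc (sc i)) != i. Proof. by apply: (@scn_neq 3); lia. Qed.
Lemma sc4 (i : 'I_d) : sc (sc (sc (sc i))) != i. Proof. by apply: (@scn_neq 4); lia. Qed.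

Lemma scK (i : 'I_d) : pc (sc i) = i. Proof. exact: ordSK. Qed.
Lemma pcK (i : 'I_d) : sc (pc i) = i. Proof. exact: ord_predK. Qed.
Lemma sc_inj : injective sc. Proof. exact: ordS_inj. Qed.

Lemma iter_d (i : 'I_d) : iter d sc i = i.
Proof. by apply: val_inj; rewrite scn_val modnDr modn_small. Qed.

Lemma adjC (i j : 'I_d) : adj i j = adj j i.
Proof. by rewrite /adj orbC. Qed.

Lemma ex_pair (i j : 'I_d) : i != j -> ~~ adj i j ->
  exists r : Pairs d, ((val r).1 == i) && ((val r).2 == j) || ((val r).1 == j) && ((val r).2 == i).
Proof.
move=> ij aij; case: (ltngtP i j) => h.
- have P : pairP (i, j) by rewrite /pairP /= h.
  by exists (exist _ (i, j) P); rewrite /= !eqxx.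
- have P : pairP (j, i) by rewrite /pairP /= h adjC.
  by exists (exist _ (j, i) P); rewrite /= !eqxx orbT.
- by move: ij; rewrite (val_inj h) eqxx.
Qed.

End Idx.

Section Alg5.
Variable K : fieldType.
Variable d : nat.
Hypothesis hd : (5 <= d)%N.
Local Notation T := (T d).
Local Notation Bf := (@Bf K d).
Local Notation X := (@X d).
Local Notation V := (@V d).
Local Notation W := (@W d).
Local Notation dl := (@dl K d).
Local Notation sc := (@sc d).
Local Notation pc := (@pc d).
Local Notation X1 := (X (@Ordinal 7 0 isT)).
Local Notation X2 := (X (@Ordinal 7 1 isT)).
Local Notation X3 := (X (@Ordinal 7 2 isT)).
Local Notation X4 := (X (@Ordinal 7 3 isT)).
Local Notation X5 := (X (@Ordinal 7 4 isT)).
Local Notation X6 := (X (@Ordinal 7 5 isT)).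
Local Notation X7 := (X (@Ordinal 7 6 isT)).

Lemma dlVV i j : dl (V i) (V j) = (i == j)%:R.
Proof. by []. Qed.

Lemma sum_dl (F : 'I_d -> K) j : \sum_k F k * (j == k)%:R = F j.
Proof.
rewrite (bigD1 j) //= eqxx mulr1 big1 ?addr0 // => k /negbTE.
by rewrite eq_sym => ->; rewrite mulr0.
Qed.

Lemma sc_eq_pc (j k : 'I_d) : (j == sc k) = (pc j == k).
Proof.
apply/eqP/eqP => [->|<-]; first exact: scK.
by rewrite pcK.
Qed.

Lemma cyc_dlr f j : cyc f (dl (V j)) = f (V (pc j)) - f (V (sc j)).
Proof.
rewrite /cyc sumrB; congr (_ - _).
  rewrite -(sum_dl (fun k => f (V k)) (pc j)); apply: eq_bigr => k _.
  by rewrite dlVV sc_eq_pc.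
by rewrite -(sum_dl (fun k => f (V (sc k))) j); apply: eq_bigr => k _.
Qed.

Lemma cyc_dll f i : cyc (dl (V i)) f = f (V (sc i)) - f (V (pc i)).
Proof. by rewrite cyc_anti cyc_dlr opprB. Qed.

Lemma BfW_r f j r : Bf f (dl (V j)) (W r) =
  f (V (val r).1) * (j == (val r).2)%:R - f (V (val r).2) * (j == (val r).1)%:R.
Proof. by []. Qed.

Lemma BfW_l f i r : Bf (dl (V i)) f (W r) =
  (i == (val r).1)%:R * f (V (val r).2) - (i == (val r).2)%:R * f (V (val r).1).
Proof. by []. Qed.

Lemma BfX7_r f j : Bf f (dl (V j)) X7 = f (V (pc j)) - f (V (sc j)).
Proof. by rewrite /= cyc_dlr /dl /=; ring. Qed.

Lemma BfX7_l f i : Bf (dl (V i)) f X7 = f (V (sc i)) - f (V (pc i)).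
Proof. by rewrite /= cyc_dll /dl /=; ring. Qed.

End Alg5.

End S5.
Import S5.

Module S6.
Set Implicit Arguments. Unset Strict Implicit. Unset Printing Implicit Defensive.
Import Order.TTheory GRing.Theory Num.Theory.
Local Open Scope ring_scope.

Section Alg6.
Variable K : fieldType.
Variable d : nat.
Hypothesis hd : (5 <= d)%N.
Local Notation T := (T d).
Local Notation Bf := (@Bf K d).
Local Notation X := (@X d).
Local Notation V := (@V d).
Local Notation W := (@W d).
Local Notation dl := (@dl K d).
Local Notation sc := (@sc d).
Local Notation pc := (@pc d).
Local Notation X1 := (X (@Ordinal 7 0 isT)).
Local Notation X2 := (X (@Ordinal 7 1 isT)).
Local Notation X3 := (X (@Ordinal 7 2 isT)).
Local Notation X4 := (X (@Ordinal 7 3 isT)).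
Local Notation X5 := (X (@Ordinal 7 4 isT)).
Local Notation X6 := (X (@Ordinal 7 5 isT)).
Local Notation X7 := (X (@Ordinal 7 6 isT)).

Lemma pc_neq_sc (i : 'I_d) : pc i != sc i.
Proof.
apply/eqP => h; move: (sc2 hd i); rewrite -h pcK eqxx //.
Qed.

Lemma neqC (T0 : eqType) (x y : T0) : x != y -> (y == x) = false.
Proof. by rewrite eq_sym => /negbTE. Qed.

Lemma offdiag (M : T -> T -> K) (e : K) : e != 0 ->
  (forall i r, Bf (M (V i)) (dl (V (sc i))) (W r) = e * Bf (dl (V i)) (M (V (sc i))) (W r)) ->
  forall i m, m != i -> M (V i) (V m) = 0.
Proof.
move=> he h i m mi.
have s1 := sc1 hd i; have s2 := sc2 hd i; have s3 := sc3 hd i; have s4 := sc4 hd i.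
case A: ((m != sc i) && (m != sc (sc i))).
  move/andP: A => [m1 m2].
  have na : ~~ adj m (sc i).
    rewrite /adj negb_or m2 andbT; apply: contra mi => /eqP /sc_inj ->; by [].
  have [r hr] := ex_pair m1 na.
  have := h i r; rewrite BfW_r BfW_l.
  case/orP: hr => /andP[/eqP -> /eqP ->];
    rewrite ?eqxx ?(negbTE m1) ?(neqC m1) ?(negbTE mi) ?(neqC mi) ?(negbTE s1) ?(neqC s1) /=.
    move=> H; apply: (lc1 (c1 := 1) H); ring.
  move=> H; apply: (lc1 (c1 := -1) H); ring.
have mm : (m == sc i) || (m == sc (sc i)) by move: A; rewrite -negb_or => /negbFE.
have pceq : forall y, pc i = y -> i = sc y by move=> y <-; rewrite pcK.
have pm : pc i != m.
  apply/eqP => /pceq e3; case/orP: mm => /eqP e2; rewrite e2 in e3.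
    by move: s2; rewrite -e3 eqxx.
  by move: s3; rewrite -e3 eqxx.
have na : ~~ adj (pc i) m.
  rewrite /adj pcK negb_or mi /=.
  apply/eqP => /pceq e3; case/orP: mm => /eqP e2; rewrite e2 in e3.
    by move: s3; rewrite -e3 eqxx.
  by move: s4; rewrite -e3 eqxx.
have pi : pc i != i by apply/eqP => /pceq e3; move: s1; rewrite -e3 eqxx.
have [r hr] := ex_pair pm na.
have := h (pc i) r; rewrite pcK BfW_r BfW_l.
case/orP: hr => /andP[/eqP -> /eqP ->];
  rewrite ?eqxx ?(negbTE mi) ?(neqC mi) ?(negbTE pi) ?(neqC pi) ?(negbTE pm) ?(neqC pm) /=.
  move=> H; have : e * M (V i) (V m) = 0 by apply: (lc1 (c1 := -1) H); ring.
  by move/eqP; rewrite mulf_eq0 (negbTE he) /= => /eqP.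
move=> H; have : e * M (V i) (V m) = 0 by apply: (lc1 (c1 := 1) H); ring.
by move/eqP; rewrite mulf_eq0 (negbTE he) /= => /eqP.
Qed.

End Alg6.

End S6.
Import S6.

Module S7.
Set Implicit Arguments. Unset Strict Implicit. Unset Printing Implicit Defensive.
Import Order.TTheory GRing.Theory Num.Theory.
Local Open Scope ring_scope.

Section Alg7.
Variable K : fieldType.
Variable d : nat.
Hypothesis hd : (5 <= d)%N.
Local Notation T := (T d).
Local Notation Bf := (@Bf K d).
Local Notation X := (@X d).
Local Notation V := (@V d).
Local Notation W := (@W d).
Local Notation dl := (@dl K d).
Local Notation sc := (@sc d).
Local Notation pc := (@pc d).
Local Notation ht := (@ht d).
Local Notation lev := (@lev K d).
Local Notation X1 := (X (@Ordinal 7 0 isT)).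
Local Notation X2 := (X (@Ordinal 7 1 isT)).
Local Notation X3 := (X (@Ordinal 7 2 isT)).
Local Notation X4 := (X (@Ordinal 7 3 isT)).
Local Notation X5 := (X (@Ordinal 7 4 isT)).
Local Notation X6 := (X (@Ordinal 7 5 isT)).
Local Notation X7 := (X (@Ordinal 7 6 isT)).

Arguments S1.dl : simpl never.
Arguments S1.cyc : simpl never.

Lemma boolM (a b : bool) : (a%:R * b%:R : K) = (a && b)%:R.
Proof. by case: a; case: b; rewrite /= ?mulr1 ?mulr0. Qed.

Lemma eqV (a b : 'I_d) : (V a == V b) = (a == b). Proof. by []. Qed.

Lemma Btie i : forall t, Bf (dl (V i)) (dl (V (sc i))) t = dl X7 t.
Proof.
case=> [[[|[|[|[|[|[|[|?]]]]]]] ?]|[?|r]] //=; try (rewrite /dl /=; ring).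
- rewrite cyc_dll /dl /= eqxx eqV eq_sym (negbTE (pc_neq_sc hd i)) /=; ring.
- case: r => [[r1 r2] /= Hr]; rewrite /dl /= !eqV.
  move: Hr; rewrite /pairP /adj /= => /andP[_ na].
  have h1 : ((i == r1) && (sc i == r2)) = false.
    by apply/negP => /andP[/eqP e1 /eqP e2]; move: na; rewrite -e1 -e2 eqxx.
  have h2 : ((i == r2) && (sc i == r1)) = false.
    by apply/negP => /andP[/eqP e1 /eqP e2]; move: na; rewrite -e1 -e2 eqxx orbT.
  by rewrite !boolM h1 h2 subrr.
Qed.

Lemma BW (r : Pairs d) : forall t, Bf (dl (V (val r).1)) (dl (V (val r).2)) t = dl (W r) t.
Proof.
case: r => [[r1 r2] Hr] /=.
have /andP[lt12 na] := Hr; rewrite /adj /= in na.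
case=> [[[|[|[|[|[|[|[|?]]]]]]] ?]|[?|q]] //=; try (rewrite /dl /=; ring).
- rewrite cyc_dll /dl /= !eqV.
  have -> : (r2 == sc r1) = false by apply/negP => e; move: na; rewrite e.
  have -> : (r2 == pc r1) = false.
    by apply/negP => /eqP e; move: na; rewrite e pcK eqxx orbT.
  by rewrite /=; ring.
- case: q => [[q1 q2] Hq]; rewrite /dl /= !eqV !boolM.
  have /andP[lq _] := Hq.
  have -> : ((r1 == q2) && (r2 == q1)) = false.
    by apply/negP => /andP[/eqP e1 /eqP e2]; move: lq lt12; rewrite e1 e2 /=; lia.
  have -> : (W (exist (fun p : 'I_d * 'I_d => pairP p) (r1, r2) Hr) ==
    inr (inr (exist (fun x : 'I_d * 'I_d => pairP x) (q1, q2) Hq))) = ((r1 == q1) && (r2 == q2)).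
    apply/eqP/andP => [[e1 e2] | [/eqP e1 /eqP e2]]; first by rewrite e1 e2 !eqxx.
    subst; congr (inr (inr _)); exact: val_inj.
  by rewrite /= subr0.
Qed.

End Alg7.

Section Der.
Variable K : fieldType.
Variable d : nat.
Hypothesis hd : (5 <= d)%N.
Local Notation T := (T d).
Local Notation Bf := (@Bf K d).
Local Notation X := (@X d).
Local Notation V := (@V d).
Local Notation W := (@W d).
Local Notation dl := (@dl K d).
Local Notation sc := (@sc d).
Local Notation pc := (@pc d).
Local Notation ht := (@ht d).
Local Notation lev := (@lev K d).
Local Notation X1 := (X (@Ordinal 7 0 isT)).
Local Notation X2 := (X (@Ordinal 7 1 isT)).
Local Notation X3 := (X (@Ordinal 7 2 isT)).
Local Notation X4 := (X (@Ordinal 7 3 isT)).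
Local Notation X5 := (X (@Ordinal 7 4 isT)).
Local Notation X6 := (X (@Ordinal 7 5 isT)).
Local Notation X7 := (X (@Ordinal 7 6 isT)).

Variable M : T -> T -> K.

Lemma gen_lev a b c : (forall s, M c s = Bf (M a) (dl b) s + Bf (dl a) (M b) s) ->
  lev (ht a).+1 (M a) -> lev (ht b).+1 (M b) -> (ht a + ht b = ht c)%N ->
  lev (ht c).+1 (M c).
Proof.
move=> hc ha hb e s hs; rewrite hc.
have l1 := Bf_lev ha (@lev_dl K d b); have l2 := Bf_lev (@lev_dl K d a) hb.
rewrite l1 ?l2 ?addr0 //; lia.
Qed.

Lemma levX (c : 'I_7) (P : (T -> K) -> Prop) :
  (forall h : (c < 7)%N, P (M (inl (Ordinal h)))) -> P (M (inl c)).
Proof. by case: c => c h; apply. Qed.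

Hypothesis hodd : odd d.
Hypothesis h2 : (2%:R : K) != 0.
Hypothesis hM : forall a b s, mulM M (Bf (dl a) (dl b)) s = Bf (M a) (dl b) s + Bf (dl a) (M b) s.

Lemma der_strict : strict M.
Proof.
have de := der_eq_of hM.
have [a1 b1 b2] := core_der hM.
have sX1 : lev 2 (M X1).
  by move=> [[[|c] hc]|[i|r]] //= hs; rewrite (bool_irrelevance hc isT).
have sX2 : lev 3 (M X2).
  move=> [[[|[|c]] hc]|[i|r]] //= hs; by rewrite (bool_irrelevance hc isT).
have sX3 := gen_lev (de _ _ _ (@B12 K d)) sX1 sX2 erefl.
have sX4 := gen_lev (de _ _ _ (@B13 K d)) sX1 sX3 erefl.
have sX5 := gen_lev (de _ _ _ (@B14 K d)) sX1 sX4 erefl.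
have sX6 := gen_lev (de _ _ _ (@B15 K d)) sX1 sX5 erefl.
have sX7 := gen_lev (de _ _ _ (@B16 K d)) sX1 sX6 erefl.
have hX7 := lev8 sX7.
have T0 : forall i s, 0 = Bf (M (V i)) (dl (V (sc i))) s + Bf (dl (V i)) (M (V (sc i))) s.
  by move=> i s; rewrite -hM (mulM_ext _ _ (@Btie K d hd i)) mulM_dl hX7.
have od : forall i m, m != i -> M (V i) (V m) = 0.
  apply: (@offdiag _ _ hd M (-1)); first by rewrite oppr_eq0 oner_eq0.
  by move=> i r; apply/eqP; rewrite mulN1r -subr_eq0 opprK eq_sym -(T0 i (W r)).
have dg : forall i, M (V i) (V i) + M (V (sc i)) (V (sc i)) = 0.
  move=> i; have := T0 i X7; rewrite BfX7_r BfX7_l scK.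
  rewrite (od i (sc (sc i))) ?sc2 // (od (sc i) (pc i)) ?pc_neq_sc //.
  by move=> ->; ring.
have lam0 : forall i, M (V i) (V i) = 0.
  move=> i.
  have it : forall k, M (V (iter k sc i)) (V (iter k sc i)) = (-1) ^+ k * M (V i) (V i).
    elim=> [|k IH] /=; first by rewrite mul1r.
    by move: (dg (iter k sc i)); rewrite IH exprS => /eqP; rewrite addrC addr_eq0 => /eqP ->; ring.
  have := it d; rewrite iter_d // -signr_odd hodd /= expr1 => /eqP.
  rewrite -subr_eq0 => /eqP h0.
  have : 2%:R * M (V i) (V i) = 0 by rewrite -h0; ring.
  by move/eqP; rewrite mulf_eq0 (negbTE h2) /= => /eqP.
have cV : forall i, [/\ M (V i) X1 = 0, M (V i) X2 = 0 & M (V i) X3 = 0].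
  move=> i.
  have e1 := hM (V i) X1; have e2 := hM (V i) X2.
  have z1 : forall s, 0 = Bf (M (V i)) (dl X1) s + Bf (dl (V i)) (M X1) s.
    by move=> s; rewrite -e1 (mulM_ext _ _ (@BV1 K d i)) mulM_0.
  have z2 : forall s, 0 = Bf (M (V i)) (dl X2) s + Bf (dl (V i)) (M X2) s.
    by move=> s; rewrite -e2 (mulM_ext _ _ (@BV2 K d i)) mulM_0.
  have := z1 X3; have := z1 X4; have := z2 X3; rewrite /= /dl /=.
  move=> H1 H2 H3; split.
  - by apply: (lc1 (c1 := -1) H1); ring.
  - by apply: (lc1 (c1 := 1) H3); ring.
  - by apply: (lc1 (c1 := 1) H2); ring.
have sV : forall i, lev 4 (M (V i)).
  move=> i [[[|[|[|c]]] hc]|[m|r]] //= hs; rewrite ?(bool_irrelevance hc isT);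
    try by case: (cV i).
  by case: (m =P i) => [->|/eqP]; [exact: lam0 | exact: od].
have sW : forall r : Pairs d, lev 7 (M (W r)).
  move=> r; apply: (gen_lev (de _ _ _ (@BW K d hd r))); [exact: sV | exact: sV | by []].
move=> [c|[i|r]]; [|exact: sV|exact: sW].
case: c => [[|[|[|[|[|[|[|c]]]]]]] hc] //; rewrite (bool_irrelevance hc isT) //.
Qed.

End Der.

End S7.
Import S7.

Module S8.
Set Implicit Arguments. Unset Strict Implicit. Unset Printing Implicit Defensive.
Import Order.TTheory GRing.Theory Num.Theory.
Local Open Scope ring_scope.

Section Cen.
Variable K : fieldType.
Variable d : nat.
Hypothesis hd : (5 <= d)%N.
Local Notation T := (T d).
Local Notation Bf := (@Bf K d).
Local Notation X := (@X d).
Local Notation V := (@V d).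
Local Notation W := (@W d).
Local Notation dl := (@dl K d).
Local Notation sc := (@sc d).
Local Notation pc := (@pc d).
Local Notation ht := (@ht d).
Local Notation lev := (@lev K d).
Local Notation X1 := (X (@Ordinal 7 0 isT)).
Local Notation X2 := (X (@Ordinal 7 1 isT)).
Local Notation X3 := (X (@Ordinal 7 2 isT)).
Local Notation X4 := (X (@Ordinal 7 3 isT)).
Local Notation X5 := (X (@Ordinal 7 4 isT)).
Local Notation X6 := (X (@Ordinal 7 5 isT)).
Local Notation X7 := (X (@Ordinal 7 6 isT)).

Variable M : T -> T -> K.
Hypothesis hP : forall a b s, mulM M (Bf (dl a) (dl b)) s = Bf (M a) (dl b) s.
Hypothesis hP' : forall a b s, mulM M (Bf (dl a) (dl b)) s = Bf (dl a) (M b) s.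

Definition lam := M X1 X1.
Definition Qm (t s : T) := M t s - lam * dl t s.

Lemma pe a b c : (forall t, Bf (dl a) (dl b) t = dl c t) ->
  forall s, M c s = Bf (M a) (dl b) s.
Proof. by move=> hB s; rewrite -hP (mulM_ext _ _ hB) mulM_dl. Qed.
Lemma pe' a b c : (forall t, Bf (dl a) (dl b) t = dl c t) ->
  forall s, M c s = Bf (dl a) (M b) s.
Proof. by move=> hB s; rewrite -hP' (mulM_ext _ _ hB) mulM_dl. Qed.

Lemma gen_levQ a b c : (forall t, Bf (dl a) (dl b) t = dl c t) ->
  lev (ht a).+1 (Qm a) -> (ht a + ht b = ht c)%N -> lev (ht c).+1 (Qm c).
Proof.
move=> hB ha e s hs.
have E : forall s, Qm c s = Bf (Qm a) (dl b) s.
  move=> s'; rewrite /Qm (pe hB).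
  have e1 : forall u, M a u = lam * dl a u + Qm a u by move=> u; rewrite /Qm; ring.
  by rewrite (Bf_ext e1 (fun _ => erefl)) Bf_linl hB; ring.
rewrite E (Bf_lev ha (@lev_dl K d b)) //; lia.
Qed.

Arguments S1.dl : simpl never.
Arguments S1.cyc : simpl never.

Lemma cen_strict : strict Qm.
Proof.
have c33 := pe (@B12 K d) X3; have c33' := pe' (@B12 K d) X3.
rewrite /= /dl /= in c33 c33'.
have c21 : M X2 X1 = 0.
  have := hP X2 X5 X6; rewrite (mulM_ext _ _ (@B25 K d)) mulM_0 /= /dl /= => H.
  by apply: (lc1 (c1 := -1) H); ring.
have sX1 : lev 2 (Qm X1).
  move=> [[[|c] hc]|[i|r]] //= hs; rewrite (bool_irrelevance hc isT) /Qm /lam /dl /=; ring.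
have sX2 : lev 3 (Qm X2).
  move=> [[[|[|c]] hc]|[i|r]] //= hs; rewrite (bool_irrelevance hc isT) /Qm /lam /dl /=.
    by rewrite c21; ring.
  have : M X1 X1 - M X2 X2 = 0 by apply: (lc2 (c1 := -1) (c2 := 1) c33 c33'); ring.
  by move/eqP; rewrite subr_eq0 => /eqP ->; ring.
have sX3 := gen_levQ (@B12 K d) sX1 erefl.
have sX4 := gen_levQ (@B13 K d) sX1 erefl.
have sX5 := gen_levQ (@B14 K d) sX1 erefl.
have sX6 := gen_levQ (@B15 K d) sX1 erefl.
have sX7 := gen_levQ (@B16 K d) sX1 erefl.
have m77 : M X7 X7 = lam.
  by rewrite (pe (@B16 K d)) /= cycX /dl /= /lam; ring.
have tie : forall i s, Bf (M (V i)) (dl (V (sc i))) s = Bf (dl (V i)) (M (V (sc i))) s.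
  by move=> i s; rewrite -(pe (@Btie K d hd i)) -(pe' (@Btie K d hd i)).
have od : forall i m, m != i -> M (V i) (V m) = 0.
  apply: (@offdiag _ _ hd M 1); first by rewrite oner_eq0.
  by move=> i r; rewrite mul1r tie.
have dg : forall i, M (V i) (V i) = lam.
  move=> i; rewrite -m77 (pe (@Btie K d hd i)) BfX7_r scK.
  by rewrite (od i (sc (sc i))) ?sc2 // subr0.
have cV : forall i, [/\ M (V i) X1 = 0, M (V i) X2 = 0 & M (V i) X3 = 0].
  move=> i.
  have z1 : forall s, 0 = Bf (M (V i)) (dl X1) s.
    by move=> s; rewrite -hP (mulM_ext _ _ (@BV1 K d i)) mulM_0.
  have z2 : forall s, 0 = Bf (M (V i)) (dl X2) s.
    by move=> s; rewrite -hP (mulM_ext _ _ (@BV2 K d i)) mulM_0.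
  have := z1 X3; have := z1 X4; have := z2 X3; rewrite /= /dl /=.
  move=> H1 H2 H3; split.
  - by apply: (lc1 (c1 := -1) H1); ring.
  - by apply: (lc1 (c1 := 1) H3); ring.
  - by apply: (lc1 (c1 := 1) H2); ring.
have sV : forall i, lev 4 (Qm (V i)).
  move=> i [[[|[|[|c]]] hc]|[m|r]] //= hs; rewrite /Qm ?(bool_irrelevance hc isT);
    try by case: (cV i) => c1 c2 c3; rewrite ?c1 ?c2 ?c3 /dl /=; ring.
  case: (m =P i) => [->|/eqP mi]; first by rewrite dg /dl eqxx /=; ring.
  by rewrite od // /dl /= eqV eq_sym (negbTE mi) /=; ring.
have sW : forall r : Pairs d, lev 7 (Qm (W r)).
  by move=> r; apply: (gen_levQ (@BW K d hd r)); [exact: sV | by []].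
move=> [c|[i|r]]; [|exact: sV|exact: sW].
case: c => [[|[|[|[|[|[|[|c]]]]]]] hc] //; rewrite (bool_irrelevance hc isT) //.
Qed.

End Cen.

End S8.
Import S8.

Module S9.
Set Implicit Arguments. Unset Strict Implicit. Unset Printing Implicit Defensive.
Import Order.TTheory GRing.Theory Num.Theory.
Local Open Scope ring_scope.

Section Mat.
Variable K : fieldType.
Variable d : nat.
Hypothesis hd : (5 <= d)%N.
Local Notation T := (T d).
Local Notation n := #|T|.
Local Notation Bf := (@Bf K d).
Local Notation dl := (@dl K d).
Local Notation ht := (@ht d).
Local Notation lev := (@lev K d).
Local Notation br := (@br K d).
Local Notation co := (@co K d).
Local Notation ofun := (@ofun K d).
Local Notation Mm := (@Mm K d).

Lemma co_dl a : forall t, co (ofun (dl a)) t = dl a t.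
Proof. exact: co_ofun. Qed.

Lemma co_mul_dl a (D : 'M[K]_n) : forall u, co (ofun (dl a) *m D) u = Mm D a u.
Proof.
move=> u; rewrite co_mul -(mulM_dl (Mm D) a u); apply: eq_bigr => t _.
by rewrite co_ofun.
Qed.

Lemma br_lev p x y : lev p (co y) -> lev p.+1 (co (br x y)).
Proof.
move=> hy s hs; rewrite co_br.
by apply: (@Bf_lev K d 1 p (co x) (co y) (@lev1 K d _) hy).
Qed.

Lemma nilp_br : nilpotent br.
Proof.
exists 7 => xs y hs.
have : lev (size xs).+1 (co (foldr br y xs)).
  elim: xs {hs} => [|x xs IH] /=; first exact: lev1.
  exact: br_lev.
rewrite hs => /lev8 h; apply: co_inj => t; by rewrite h co0.
Qed.

Lemma der_fun (D : 'M[K]_n) : is_derivation br D ->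
  forall a b s, mulM (Mm D) (Bf (dl a) (dl b)) s = Bf (Mm D a) (dl b) s + Bf (dl a) (Mm D b) s.
Proof.
move=> hD a b s.
have := congr1 (fun v => co v s) (hD (ofun (dl a)) (ofun (dl b))).
rewrite /= coD !co_br co_mul.
have -> : \sum_t co (br (ofun (dl a)) (ofun (dl b))) t * Mm D t s = mulM (Mm D) (Bf (dl a) (dl b)) s.
  by apply: eq_bigr => t _; rewrite co_br (Bf_ext (co_dl a) (co_dl b)).
move=> ->.
by rewrite (Bf_ext (co_mul_dl a D) (co_dl b)) (Bf_ext (co_dl a) (co_mul_dl b D)).
Qed.

Lemma char_nilp (hodd : odd d) (h2 : (2%:R : K) != 0) : char_nilpotent br.
Proof.
split; first exact: nilp_br.
exists 7 => Ds Y hs hD.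
suff : forall p Y, lev p (co Y) -> lev (p + size Ds) (co (foldl (@mulmx K 1 n n) Y Ds)).
  move=> /(_ 1 Y (@lev1 K d _)); rewrite hs => /lev8 h.
  by apply: co_inj => t; rewrite h co0.
elim: Ds {hs} hD => [|D Ds IH] hD p Y' hY /=; first by rewrite addn0.
rewrite addnS -addSn; apply: IH.
  by move=> D' hD'; apply: hD; rewrite in_cons hD' orbT.
apply: lev_mul => //.
apply: (der_strict hd hodd h2); apply: der_fun; apply: hD; exact: mem_head.
Qed.

End Mat.

Section NS.
Variable K : fieldType.
Variable d : nat.
Hypothesis hd : (5 <= d)%N.
Local Notation T := (T d).
Local Notation n := #|T|.
Local Notation Bf := (@Bf K d).
Local Notation dl := (@dl K d).
Local Notation ht := (@ht d).
Local Notation lev := (@lev K d).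
Local Notation br := (@br K d).
Local Notation co := (@co K d).
Local Notation ofun := (@ofun K d).
Local Notation Mm := (@Mm K d).

Lemma coZ c (x : 'rV[K]_n) t : co (c *: x) t = c * co x t.
Proof. by rewrite /co mxE. Qed.

Lemma cen_fun (P : 'M[K]_n) : (forall x y, br x y *m P = br (x *m P) y) ->
  forall a b s, mulM (Mm P) (Bf (dl a) (dl b)) s = Bf (Mm P a) (dl b) s.
Proof.
move=> hD a b s.
have := congr1 (fun v => co v s) (hD (ofun (dl a)) (ofun (dl b))).
rewrite /= !co_br co_mul.
have -> : \sum_t co (br (ofun (dl a)) (ofun (dl b))) t * Mm P t s = mulM (Mm P) (Bf (dl a) (dl b)) s.
  by apply: eq_bigr => t _; rewrite co_br (Bf_ext (@co_dl K d a) (@co_dl K d b)).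
move=> ->.
by rewrite (Bf_ext (@co_mul_dl K d a P) (@co_dl K d b)).
Qed.

Lemma cen_fun' (P : 'M[K]_n) : (forall x y, br x y *m P = br x (y *m P)) ->
  forall a b s, mulM (Mm P) (Bf (dl a) (dl b)) s = Bf (dl a) (Mm P b) s.
Proof.
move=> hD a b s.
have := congr1 (fun v => co v s) (hD (ofun (dl a)) (ofun (dl b))).
rewrite /= !co_br co_mul.
have -> : \sum_t co (br (ofun (dl a)) (ofun (dl b))) t * Mm P t s = mulM (Mm P) (Bf (dl a) (dl b)) s.
  by apply: eq_bigr => t _; rewrite co_br (Bf_ext (@co_dl K d a) (@co_dl K d b)).
move=> ->.
by rewrite (Bf_ext (@co_dl K d a) (@co_mul_dl K d b P)).
Qed.

Lemma zero_of (Q : 'M[K]_n) (c : K) (x : 'rV[K]_n) :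
  strict (Mm Q) -> x = c *: (x *m Q) -> x = 0.
Proof.
move=> hQ hx.
have : forall p, lev p (co x).
  elim=> [|p IH]; first by move=> s.
  move=> s hs; rewrite hx coZ (lev_mul hQ IH) ?mulr0 //.
move=> /(_ 8) /lev8 h; apply: co_inj => t; by rewrite h co0.
Qed.

Lemma mat0_of (A : 'M[K]_n) : (forall x : 'rV[K]_n, (x <= A)%MS -> x = 0) -> A = 0.
Proof.
move=> h; apply/row_matrixP => i; rewrite row0; apply: h; exact: row_sub.
Qed.

Lemma nonsplit_br : nonsplit br.
Proof.
move=> [I [J [hI [hJ [I0 [J0 [hIJ hcap]]]]]]].
have cap0 : (I :&: J = 0)%MS.
  by move/andP: hcap => [h _]; apply/eqP; rewrite -submx0.
have full : forall x : 'rV[K]_n, (x <= I + J)%MS.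
  move=> x; move/andP: hIJ => [_ h]; exact: submx_trans (submx1 x) h.
have in0 : forall v : 'rV[K]_n, (v <= I)%MS -> (v <= J)%MS -> v = 0.
  by move=> v vI vJ; apply/eqP; rewrite -submx0 -cap0 sub_capmx vI vJ.
set P := proj_mx I J.
have cross : forall u v : 'rV[K]_n, (u <= I)%MS -> (v <= J)%MS -> br u v = 0.
  move=> u v uI vJ; apply: in0; first exact: hI.
  by rewrite br_anti eqmx_opp; apply: hJ.
have dec : forall x : 'rV[K]_n, x = x *m P + (x - x *m P) by move=> x; rewrite addrC subrK.
have s1 : forall x : 'rV[K]_n, (x *m P <= I)%MS by move=> x; exact: proj_mx_sub.
have s2 : forall x : 'rV[K]_n, (x - x *m P <= J)%MS by move=> x; exact: proj_mx_compl_sub.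
have hP : forall x y : 'rV[K]_n, br x y *m P = br (x *m P) y.
  move=> x y.
  move: (s1 x) (s2 x) (s1 y) (s2 y) (dec x) (dec y).
  move: (x *m P) (x - x *m P) (y *m P) (y - y *m P) => x1 x2 y1 y2 h1 h2 h3 h4 -> ->.
  rewrite br_addl !br_addr (cross x1 y2) // (br_anti x2 y1) (cross y1 x2) // oppr0 !addr0 add0r.
  by rewrite mulmxDl (proj_mx_id cap0 (hI _ _ h1)) (proj_mx_0 cap0 (hJ _ _ h2)) addr0.
have hP' : forall x y : 'rV[K]_n, br x y *m P = br x (y *m P).
  by move=> x y; rewrite br_anti mulNmx hP -br_anti.
have hs := cen_strict hd (cen_fun hP) (cen_fun' hP').
have pJ : forall y : 'rV[K]_n, (y <= J)%MS -> y *m P = 0 by move=> y; exact: proj_mx_0.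
have pI : forall x : 'rV[K]_n, (x <= I)%MS -> x *m P = x by move=> x; exact: proj_mx_id.
clearbody P.
set lam := S8.lam (Mm P) in hs.
set Q := P - lam%:M.
have sQ : strict (Mm Q).
  move=> t s hts; rewrite /Mm /Q !mxE (inj_eq enum_rank_inj) -mulr_natr.
  exact: (hs t s hts).
have xQ : forall x : 'rV[K]_n, x *m Q = x *m P - lam *: x.
  by move=> x; rewrite mulmxBr mul_mx_scalar.
case: (lam =P 1) => [l1|l1].
- move/negP: J0; apply; apply/eqP; apply: mat0_of => y yJ.
  apply: (zero_of (c := -1) sQ).
  by rewrite xQ (pJ _ yJ) l1 scale1r sub0r scaleN1r opprK.
- move/negP: I0; apply; apply/eqP; apply: mat0_of => x xI.
  have h1 : 1 - lam != 0 by rewrite subr_eq0 eq_sym; apply/eqP.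
  apply: (zero_of (c := (1 - lam)^-1) sQ).
  rewrite xQ (pI _ xI) -{2}(scale1r x) -scalerBl scalerA mulVf //.
  by rewrite scale1r.
Qed.

End NS.

End S9.
Import S9.

Module S10.
Set Implicit Arguments. Unset Strict Implicit. Unset Printing Implicit Defensive.
Import Order.TTheory GRing.Theory Num.Theory.
Local Open Scope ring_scope.

Section Cent.
Variable K : fieldType.
Variable d : nat.
Hypothesis hd : (5 <= d)%N.
Local Notation T := (T d).
Local Notation n := #|T|.
Local Notation Bf := (@Bf K d).
Local Notation X := (@X d).
Local Notation V := (@V d).
Local Notation W := (@W d).
Local Notation dl := (@dl K d).
Local Notation sc := (@sc d).
Local Notation br := (@br K d).
Local Notation co := (@co K d).
Local Notation ofun := (@ofun K d).
Local Notation X1 := (X (@Ordinal 7 0 isT)).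
Local Notation X2 := (X (@Ordinal 7 1 isT)).
Local Notation X7 := (X (@Ordinal 7 6 isT)).

Definition central (t : T) : bool :=
  match t with inl c => val c == 6 | inr (inl _) => false | inr (inr _) => true end.

Definition Zd : 'M[K]_n := \matrix_(i, j) ((i == j) && central (enum_val i))%:R.

Lemma subZ (x : 'rV[K]_n) : (x <= Zd)%MS <-> forall t, ~~ central t -> co x t = 0.
Proof.
split.
- move=> /submxP[w ->] t ht; rewrite /co mxE big1 // => j _; rewrite mxE.
  case: eqP => [->|_]; last by rewrite mulr0.
  by rewrite enum_rankK (negbTE ht) mulr0.
- move=> h; have -> : x = x *m Zd; last exact: submxMl.
  apply/rowP => k; rewrite mxE (bigD1 k) //= big1 ?addr0.
    rewrite mxE eqxx /=; case: (boolP (central (enum_val k))) => c; first by rewrite mulr1.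
    by rewrite mulr0; move: (h _ c); rewrite /co enum_valK => ->.
  by move=> j /negbTE jk; rewrite mxE jk mulr0.
Qed.

Lemma Bf_central f g t : (forall s, ~~ central s -> f s = 0) -> Bf f g t = 0.
Proof.
move=> h.
have h1 : forall c : 'I_7, (c < 6)%N -> f (inl c) = 0.
  by move=> c hc; apply: h => /=; rewrite neq_ltn hc.
have hV : forall i, f (V i) = 0 by move=> i; exact: h.
case: t => [[[|[|[|[|[|[|[|c]]]]]]] hc]|[i|r]] //=; rewrite ?h1 ?hV ?mul0r ?subrr //;
  try ring.
by rewrite cyc0l //; ring.
Qed.

Lemma center_Zd : is_center_mx br Zd.
Proof.
move=> x; split.
- move/subZ => h y; apply: co_inj => t; rewrite co_br co0; exact: Bf_central.
- move=> hy; apply/subZ.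
  have e : forall b s, Bf (co x) (dl b) s = 0.
    move=> b s; rewrite -(co0 K (d:=d) s) -(hy (ofun (dl b))) co_br.
    by apply: Bf_ext => // u; rewrite co_ofun.
  have eX1 := e X1; have eX2 := e X2.
  case=> [[[|[|[|[|[|[|[|c]]]]]]] hc]|[m|r]] //= _; rewrite ?(bool_irrelevance hc isT).
  + by have := eX2 (X (@Ordinal 7 2 isT)); rewrite /= /dl /=; move=> H; apply: (lc1 (c1 := 1) H); ring.
  + by have := eX1 (X (@Ordinal 7 2 isT)); rewrite /= /dl /=; move=> H; apply: (lc1 (c1 := -1) H); ring.
  + by have := eX1 (X (@Ordinal 7 3 isT)); rewrite /= /dl /=; move=> H; apply: (lc1 (c1 := -1) H); ring.
  + by have := eX1 (X (@Ordinal 7 4 isT)); rewrite /= /dl /=; move=> H; apply: (lc1 (c1 := -1) H); ring.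
  + by have := eX1 (X (@Ordinal 7 5 isT)); rewrite /= /dl /=; move=> H; apply: (lc1 (c1 := -1) H); ring.
  + have := eX1 X7; rewrite /= cycX /dl /=; move=> H; apply: (lc1 (c1 := -1) H); ring.
  + have s1 := sc1 hd m; have s2 := sc2 hd m; have s3 := sc3 hd m.
    have mm : m != sc (sc m) by rewrite eq_sym.
    have na : ~~ adj m (sc (sc m)).
      rewrite /adj negb_or; apply/andP; split.
        by apply: contra s1 => /eqP /sc_inj /eqP; rewrite eq_sym.
      by rewrite eq_sym.
    have [r hr] := ex_pair mm na.
    have := e (V (sc (sc m))) (W r); rewrite BfW_r.
    case/orP: hr => /andP[/eqP -> /eqP ->]; rewrite eqxx (negbTE s2) /=.
      by move=> H; apply: (lc1 (c1 := 1) H); ring.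
    by move=> H; apply: (lc1 (c1 := -1) H); ring.
Qed.

End Cent.

End S10.
Import S10.

Module S11.
Set Implicit Arguments. Unset Strict Implicit. Unset Printing Implicit Defensive.
Import Order.TTheory GRing.Theory Num.Theory.
Local Open Scope ring_scope.

Section Rank.
Variable K : fieldType.
Variable d : nat.
Local Notation T := (T d).
Local Notation n := #|T|.
Local Notation co := (@co K d).
Local Notation X := (@X d).
Local Notation W := (@W d).
Local Notation X7 := (X (@Ordinal 7 6 isT)).

Lemma rank_Zd : \rank (Zd K d) = #|[pred t : T | central t]|.
Proof.
set S := (\sum_(t | central t) <<delta_mx 0 (enum_rank t) : 'rV[K]_n>>)%MS.
have -> : \rank (Zd K d) = \rank S.
  apply/eqmx_rank/andP; split.
  - apply/row_subP => i; case: (boolP (central (enum_val i))) => c.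
      have -> : row i (Zd K d) = delta_mx 0 (enum_rank (enum_val i)).
        by apply/rowP => j; rewrite !mxE enum_valK c andbT eqxx eq_sym.
      by apply: (sumsmx_sup (enum_val i)) => //; rewrite genmxE.
    have -> : row i (Zd K d) = 0.
      by apply/rowP => j; rewrite !mxE (negbTE c) andbF.
    exact: sub0mx.
  - apply/sumsmx_subP => t ct; rewrite genmxE; apply/subZ => s hs.
    rewrite /co mxE (inj_eq enum_rank_inj) /=.
    by case: eqP => // ets; move: hs; rewrite ets ct.
have := @mxdirect_delta K T (fun t => central t) n (@enum_rank T) (in2W (@enum_rank_inj T)).
move/mxdirectP => /= ->.
rewrite (eq_bigr (fun _ => 1%N)) => [|t _]; last by rewrite mxrank_gen mxrank_delta.
by rewrite sum1_card.
Qed.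

Definition gopt (o : option (Pairs d)) : T :=
  match o with None => X7 | Some r => W r end.

Lemma gopt_inj : injective gopt.
Proof. by move=> [r|] [q|] //= [->]. Qed.

Lemma card_central : #|[pred t : T | central t]| = (#|{: Pairs d}|).+1.
Proof.
rewrite -card_option -(card_codom gopt_inj); apply: eq_card => t.
rewrite !inE; apply/idP/codomP.
- case: t => [[c hc]|[i|r]] //= c6.
    exists None; rewrite /gopt /X7 /X; congr inl; apply: val_inj => /=; exact/eqP.
  by exists (Some r).
- by case=> [[r|] ->].
Qed.

Lemma card_T : #|T| = (7 + (d + #|{: Pairs d}|))%N.
Proof. by rewrite /S1.T card_sum card_ord card_sum card_ord. Qed.

End Rank.

Section Count.
Variable k : nat.
Local Notation d := (2 * k + 3)%N.

Lemma sc_small (i : 'I_d) : (i.+1 < d)%N -> val (sc i) = i.+1.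
Proof. by move=> h; rewrite /S1.sc /ordS /= modn_small. Qed.

Lemma pairs_lb : (k * k <= #|{: Pairs d}|)%N.
Proof.
have h1 : forall s : 'I_k, (s.+1 < d)%N by move=> s; have := ltn_ord s; lia.
have h2 : forall t : 'I_k, (k + 2 + t < d)%N by move=> t; have := ltn_ord t; lia.
have hp : forall st : 'I_k * 'I_k,
    pairP (Ordinal (h1 st.1), Ordinal (h2 st.2)).
  move=> [s t]; rewrite /pairP /adj /=; have := ltn_ord s; have := ltn_ord t => hs ht.
  apply/andP; split; first by lia.
  rewrite negb_or; apply/andP; split; apply/eqP => /(congr1 val) /=.
    by rewrite modn_small; lia.
  by rewrite modn_small; lia.
pose f (st : 'I_k * 'I_k) : Pairs d := exist (fun p => pairP p) _ (hp st).
have finj : injective f.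
  move=> [s t] [s' t'] /(congr1 val) /= [] e1 e2.
  by congr pair; apply: val_inj => /=; lia.
by have := @leq_card _ _ f finj; rewrite card_prod card_ord.
Qed.

End Count.

End S11.
Import S11.

From HB Require Import structures.
From mathcomp Require Import all_boot all_order all_algebra.
From mathcomp Require Import reals complex.
From mathcomp Require Import zify ring lra.
Import Order.TTheory GRing.Theory Num.Theory.
Local Open Scope ring_scope.
Local Open Scope complex_scope.

Theorem mainTheorem2 (R : realType) (eps : R) : 0 < eps ->
  exists (n : nat) (br : 'rV[R[i]]_n -> 'rV[R[i]]_n -> 'rV[R[i]]_n),
    [/\ is_lie_bracket br, nonsplit br, char_nilpotent br &
    exists Z : 'M[R[i]]_n, is_center_mx br Z /\ (0 < \rank Z)%N /\
      ((n - \rank Z)%N%:R / (\rank Z)%:R < eps)%R].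
Proof.
move=> he.
pose k := (Num.bound (11 / eps) + 2)%N.
have hk : 11 / eps < k%:R.
  apply: (lt_le_trans (archi_boundP _)); first by rewrite divr_ge0 // ltW.
  by rewrite ler_nat /k leq_addr.
pose d := (2 * k + 3)%N.
have hd : (5 <= d)%N by rewrite /d /k; lia.
have hodd : odd d by rewrite /d oddD oddM.
have h2 : (2%:R : R[i]) != 0 by rewrite pnatr_eq0.
exists #|S1.T d|, (@S2.br R[i] d).
split.
- exact: br_lie.
- exact: nonsplit_br hd.
- exact: char_nilp hd hodd h2.
exists (Zd R[i] d); split; first exact: center_Zd hd.
rewrite rank_Zd card_central card_T.
split; first by [].
have hP := pairs_lb k.
rewrite -/d in hP.
move: hP; set p := #|{: Pairs d}| => hP.
have -> : ((7 + (d + p)) - p.+1 = 2 * k + 9)%N by rewrite /d; lia.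
rewrite ltr_pdivrMr ?ltr0Sn //.
have hk1 : (1 <= k)%N by rewrite /k; lia.
have e1 : 11 < k%:R * eps by rewrite -ltr_pdivrMr.
have e2 : ((k * k)%:R <= p%:R :> R) by rewrite ler_nat.
have e3 : ((2 * k + 9)%:R <= 11 * k%:R :> R).
  by rewrite -natrM ler_nat; lia.
have e4 : (1 <= k%:R :> R) by rewrite ler1n.
rewrite natrM in e2.
rewrite -addn1 natrD.
nra.
Qed.
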